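(* Let $M$ be an $n$-dimensional manifold (or open subset of $\mathbb{R}^n$) with coordinates $x^1,\dots,x^n$, and let $\eta^{ij}=\eta_{ij}$ be a constant diagonal matrix with diagonal entries $\eta^{ii}=\eta_{ii}\in\{1,-1\}$. Let $\mathcal{K}$ be the Clifford algebra of differential forms (over the ring of scalar functions on $M$) generated by $dx^1,\dots,dx^n$ subject to $dx^i dx^j+dx^j dx^i=2\eta^{ij}$, and let $\mathcal{C}$ be the real Clifford algebra generated by vectors $\mathbf{a}_1,\dots,\mathbf{a}_n$ subject to $\mathbf{a}_i\mathbf{a}_j+\mathbf{a}_j\mathbf{a}_i=2\eta_{ij}$. On the tensor product $\mathcal{K}\otimes\mathcal{C}$ (with scalar-function coefficients), define the product $(\vee,\vee)$ by $(f\,u\,A)(\vee,\vee)(g\,v\,B)=fg\,(uv)(AB)$ for scalar functions $f,g$, $u,v\in\mathcal{K}$, $A,B\in\mathcal{C}$, extended bilinearly, where $uv$ and $AB$ are the respective Clifford products. For an increasing multi-index $I=(i_1<\dots<i_p)$ (including the empty one) write $dx^I=dx^{i_1}\cdots dx^{i_p}$ and $\mathbf{a}_I=\mathbf{a}_{i_1}\cdots\mathbf{a}_{i_p}$. Call an element mirror symmetric if it is of the form $\sum_I f_I\, dx^I\mathbf{a}_I$ with scalar functions $f_I$. Then the set of mirror symmetric elements is closed under $(\vee,\vee)$ and, with this product, forms a commutative algebra: for all mirror symmetric $U,V$, $U(\vee,\vee)V=V(\vee,\vee)U$ and this product is mirror symmetric.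
   Context: Elements such as $dx^1\mathbf{a}_1$ or $dx^1dx^2\mathbf{a}_1\mathbf{a}_2$ are mirror symmetric (the index set of the differential-form factor equals that of the tangent Clifford factor), while e.g. $dx^1\mathbf{a}_2$ is not. The product $(\vee,\vee)$ uses the Clifford product in both tensor factors simultaneously. *)

(* Defs.v *)
From HB Require Import structures.
From mathcomp Require Import all_boot all_order all_algebra.
Set Implicit Arguments. Unset Strict Implicit. Unset Printing Implicit Defensive.
Import Order.TTheory GRing.Theory Num.Theory.
Local Open Scope ring_scope.

(* Increasing multi-indices I = (i_1 < ... < i_p) are encoded as subsets of 'I_n. *)
Definition setSD (n : nat) (A B : {set 'I_n}) : {set 'I_n} := (A :\: B) :|: (B :\: A).

(* Clifford product of basis blades for a diagonal metric eta:
   e_I e_J = (-1)^{#{(i,j) : i in I, j in J, j < i}} * (prod_{k in I /\ J} eta_k) * e_{I \triangle J}. *)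
Definition cliff_sign (R : comRingType) (n : nat) (eta : 'I_n -> R)
  (I J : {set 'I_n}) : R :=
  (-1) ^+ #|[set p : 'I_n * 'I_n | (p.1 \in I) && (p.2 \in J) && ((p.2 < p.1)%N) ]|
  * \prod_(k in I :&: J) eta k.

(* Elements of K (x) C with scalar coefficients in R: coefficient of dx^I a_J
   stored at (I, J). *)
Definition KC (R : comRingType) (n : nat) := {ffun {set 'I_n} * {set 'I_n} -> R}.

Definition vvprod (R : comRingType) (n : nat) (eta : 'I_n -> R)
  (U V : KC R n) : KC R n :=
  [ffun KL : {set 'I_n} * {set 'I_n} =>
     \sum_(p : {set 'I_n} * {set 'I_n}) \sum_(q : {set 'I_n} * {set 'I_n})
       if (setSD p.1 q.1 == KL.1) && (setSD p.2 q.2 == KL.2) then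
         U p * V q * cliff_sign eta p.1 q.1 * cliff_sign eta p.2 q.2
       else 0].

Definition mirror_symmetric (R : comRingType) (n : nat) (U : KC R n) : Prop :=
  forall I J : {set 'I_n}, I != J -> U (I, J) = 0.

(* Main.v *)
Require Import Defs.
From mathcomp Require Import all_boot all_order all_algebra.
Import GRing.Theory.
Local Open Scope ring_scope.

Lemma cs_sq (R : comRingType) (n : nat) (eta : 'I_n -> R) I J :
  cliff_sign eta I J * cliff_sign eta I J = cliff_sign eta J I * cliff_sign eta J I.
Proof.
rewrite /cliff_sign setIC.
set a := #|_|; set b := #|_|; set P := \prod_(k in _) _.
have sq (m : nat) : ((-1) ^+ m * P) * ((-1) ^+ m * P) = P * P :> R.
  by rewrite mulrACA -exprMn mulrNN mulr1 expr1n mul1r.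
by rewrite !sq.
Qed.

Lemma mySDC (n : nat) (A B : {set 'I_n}) : Defs.setSD A B = Defs.setSD B A.
Proof. by rewrite /Defs.setSD finset.setUC. Qed.

Theorem mainTheorem1 (R : comRingType) (n : nat) (eta : 'I_n -> R)
  (heta : forall i, eta i = 1 \/ eta i = -1)
  (U V : KC R n) :
  mirror_symmetric U -> mirror_symmetric V ->
  vvprod eta U V = vvprod eta V U /\ mirror_symmetric (vvprod eta U V).
Proof.
move=> hU hV; split.
  apply/ffunP => KL; rewrite !ffunE exchange_big /=.
  apply: eq_bigr => p _; apply: eq_bigr => q _.
  rewrite (@mySDC _ q.1) (@mySDC _ q.2).
  case: ifP => // _.
  case: p => p1 p2; case: q => q1 q2 /=.
  have [e1|ne1] := eqVneq q1 q2; last by rewrite (hU _ _ ne1) !mul0r mulr0 !mul0r.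
  have [e2|ne2] := eqVneq p1 p2; last by rewrite (hV _ _ ne2) !mulr0 !mul0r.
  subst p2 q2.
  rewrite [U _ * V _]mulrC -[_ * cliff_sign eta q1 p1 * _]mulrA -[_ * cliff_sign eta p1 q1 * _]mulrA cs_sq; done.
move=> K L hKL; rewrite ffunE /=.
apply: big1 => p _; apply: big1 => q _.
case: ifP => // /andP [/eqP h1 /eqP h2].
case: p h1 h2 => p1 p2; case: q => q1 q2 /= h1 h2.
have [e1|ne1] := eqVneq p1 p2; last by rewrite (hU _ _ ne1) !mul0r.
have [e2|ne2] := eqVneq q1 q2; last by rewrite (hV _ _ ne2) mulr0 !mul0r.
by subst; rewrite eqxx in hKL.
Qed.
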